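(* Let $(a,b,c)\in\mathbb{Z}^3$ be a primitive triple with $a^2+b^3=c^{10}$, and suppose that $f(x)=x^3+3bx-2a$ is irreducible over $\mathbb{Q}$. Then the splitting field of $f$ over $\mathbb{Q}$ is isomorphic to the splitting field of $x^3-6x-6$ over $\mathbb{Q}$; equivalently $\mathbb{Q}(E_{(a,b,c)}[2])\cong\mathbb{Q}(E_{(3,-2,1)}[2])$.
   Context: A triple $(a,b,c)$ is primitive if $\gcd(a,b,c)=1$. $E_{(a,b,c)}$ denotes the curve $Y^2=X^3+3bX-2a$, and $\mathbb{Q}(E[2])$ denotes the field generated by the coordinates of the $2$-torsion points, i.e. the splitting field of the cubic. *)

(* Defs.v *)
From HB Require Import structures.
From mathcomp Require Import all_boot all_order all_algebra all_field.
Set Implicit Arguments. Unset Strict Implicit. Unset Printing Implicit Defensive.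
Import GRing.Theory Num.Theory.
Local Open Scope ring_scope.

Definition fcubic (a b : int) : {poly rat} :=
  'X^3 + ((3 * b)%:~R)%:P * 'X - ((2 * a)%:~R)%:P.

(* L is a splitting field of p over Q: L is generated over Q (= 1%VS)
   by the roots of p, and p splits into linear factors in L. *)
Definition is_splitting_field_Q (L : fieldExtType rat) (p : {poly rat}) : Prop :=
  splittingFieldFor 1%VS (map_poly (in_alg L) p) fullv.

Definition field_iso (L1 L2 : fieldExtType rat) : Prop :=
  exists g : {rmorphism L1 -> L2}, bijective g.

(* Main.v *)
Require Import Defs.
From HB Require Import structures.
From mathcomp Require Import all_boot all_order all_algebra all_field.
From mathcomp Require Import ring zify.
Import GRing.Theory Num.Theory.
Set Implicit Arguments. Unset Strict Implicit. Unset Printing Implicit Defensive.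
Local Open Scope ring_scope.

Local Close Scope ring_scope.
Lemma prod_cube (s : seq nat) (f : nat -> nat) :
  (\prod_(p <- s) f p) ^ 3 = \prod_(p <- s) (f p) ^ 3.
Proof.
by elim: s => [|q s IH]; rewrite ?big_nil ?big_cons ?expnMn ?IH.
Qed.

Lemma cube_of (X : nat) : 0 < X -> (forall p, prime p -> 3 %| logn p X) ->
  exists T, X = T ^ 3.
Proof.
move=> X0 h; exists (\prod_(p <- primes X) p ^ (logn p X %/ 3)).
rewrite prod_cube {1}(prod_prime_decomp X0) prime_decompE big_map /=.
apply: eq_big_seq => p; rewrite mem_primes => /and3P[pp _ _].
by rewrite -expnM divnK // h.
Qed.

Lemma NTnat (M N B : nat) : M * N = B ^ 3 -> 0 < M ->
  (forall p, prime p -> odd p -> p %| M -> p %| N -> False) ->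
  exists k T, k < 3 /\ M * 4 ^ k = T ^ 3.
Proof.
move=> hMN M0 hp.
pose k := logn 2 M %% 3.
suff [T hT] : exists T, M * 4 ^ k = T ^ 3 by exists k, T; split => //; rewrite /k ltn_pmod.
have X0 : 0 < M * 4 ^ k by rewrite muln_gt0 M0 expn_gt0.
apply: cube_of => // p pp.
rewrite lognM ?expn_gt0 // lognX.
have [->|oddp] := even_prime pp.
  have -> : logn 2 4 = 2 by rewrite (lognX 2 2 2) logn_prime.
  rewrite /k; lia.
have -> : logn p 4 = 0.
  apply: logn_coprime; rewrite prime_coprime // (_ : 4 = 2 ^ 2) //.
  rewrite Euclid_dvdX // andbT dvdn_prime2 //.
  by apply/eqP => p2; rewrite p2 in oddp.
rewrite muln0 addn0.
have [pM|npM] := boolP (p %| M); last by rewrite logn_coprime ?prime_coprime.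
have npN : ~~ (p %| N) by apply/negP => pN; exact: hp p pp oddp pM pN.
have N0 : 0 < N by rewrite lt0n; apply: contraNneq npN => ->; rewrite dvdn0.
have B0 : 0 < B.
  rewrite lt0n; apply/eqP => B0; have := hMN; rewrite B0 => /eqP.
  by rewrite muln_eq0 (negPf (lt0n_neq0 M0)) (negPf (lt0n_neq0 N0)).
have := congr1 (logn p) hMN; rewrite lognM // lognX (@logn_coprime p N) ?prime_coprime //.
by rewrite addn0 => ->; rewrite dvdn_mulr.
Qed.

Local Open Scope ring_scope.

Lemma NTint (m n b : int) : m * n = - b^+3 -> m != 0 ->
  (forall p : nat, prime p -> odd p -> (p %| `|m|)%N -> (p %| `|n|)%N -> False) ->
  exists (k : nat) (T : int), (k < 3)%N /\ m * 4^+k = T^+3.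
Proof.
move=> hmn m0 hp.
have hMN : (`|m| * `|n| = `|b| ^ 3)%N.
  by have := congr1 absz hmn; rewrite abszM abszN abszX.
have M0 : (0 < `|m|)%N by rewrite absz_gt0.
have [k [T [hk hT]]] := NTnat hMN M0 hp.
exists k, ((-1)^+(m < 0)%R * T%:Z); split => //.
have Em := intEsign m; rewrite {1}Em -mulrA.
have -> : `|m|%:Z * 4^+k = (T^3)%N%:Z.
  by rewrite -hT PoszM; congr (_ * _); rewrite -natrX natz.
rewrite exprMn -[(T^3)%N%:Z]natz natrX; congr (_ * _).
  by case: (m < 0)%R; rewrite ?expr1 ?expr0 ?expr1n // -signr_odd.
by rewrite natz.
Qed.


Lemma hornerB_ (R : comNzRingType) (p q : {poly R}) x : (p - q).[x] = p.[x] - q.[x].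
Proof. by rewrite hornerD hornerN. Qed.

Lemma ext_morph (L M : fieldExtType rat) (x : L) (P : {poly rat}) (rs : seq M) :
  <<1; x>>%VS = fullv -> P != 0 -> root (map_poly (in_alg L) P) x ->
  map_poly (in_alg M) P %= \prod_(z <- rs) ('X - z%:P) ->
  exists g : {rmorphism L -> M}, True.
Proof.
move=> genx nzP Px splitP.
have [mp Dmp] : exists mp, minPoly 1 x = map_poly (in_alg L) mp.
  by apply/polyOver1P; apply: minPolyOver.
have mpP : mp %| P.
  rewrite -(dvdp_map (in_alg L)) -Dmp; apply: minPoly_dvdp => //.
  exact: alg_polyOver.
have [y ry] : exists y, root (map_poly (in_alg M) mp) y.
  have : map_poly (in_alg M) mp %| \prod_(z <- rs) ('X - z%:P).
    by rewrite -(eqp_dvdr _ splitP) dvdp_map.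
  case/dvdp_prod_XsubC => m Dm.
  exists (mask m rs)`_0; rewrite (eqp_root Dm) root_prod_XsubC mem_nth //.
  rewrite -ltnS -(size_prod_XsubC _ id) -(eqp_size Dm) size_map_poly.
  have := size_minPoly 1 x; rewrite Dmp size_map_poly => ->.
  by rewrite ltnS /adjoin_degree.
have ex0 u : exists q, u = (map_poly (in_alg L) q).[x].
  by apply/Fadjoin1_polyP; rewrite genx memvf.
have ex u : exists q, u == (map_poly (in_alg L) q).[x].
  by have [q ->] := ex0 u; exists q.
have key q1 q2 : (map_poly (in_alg L) q1).[x] = (map_poly (in_alg L) q2).[x] ->
    (map_poly (in_alg M) q1).[y] = (map_poly (in_alg M) q2).[y].
  move=> /eqP; rewrite -subr_eq0 -hornerB_ -rmorphB => /eqP/rootP h.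
  apply/eqP; rewrite -subr_eq0 -hornerB_ -rmorphB; apply/eqP/rootP.
  have : mp %| q1 - q2.
    rewrite -(dvdp_map (in_alg L)) -Dmp; apply: minPoly_dvdp => //.
    exact: alg_polyOver.
  rewrite -(dvdp_map (in_alg M)) => /dvdpP[r Dr].
  change (root (map_poly (in_alg M) (q1 - q2)) y); rewrite Dr.
  by rewrite rootM ry orbT.
pose phi u := (map_poly (in_alg M) (xchoose (ex u))).[y].
have phiE q : phi (map_poly (in_alg L) q).[x] = (map_poly (in_alg M) q).[y].
  by apply: key; rewrite -(eqP (xchooseP (ex _))).
have phiA : zmod_morphism phi.
  move=> u v; have [qu ->] := ex0 u; have [qv ->] := ex0 v.
  by rewrite -hornerB_ -rmorphB !phiE rmorphB hornerB_.
have phiM : monoid_morphism phi.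
  split; first by have := phiE 1; rewrite !rmorph1 !hornerC.
  move=> u v; have [qu ->] := ex0 u; have [qv ->] := ex0 v.
  by rewrite -hornerM -rmorphM !phiE rmorphM hornerM.
pose faM := GRing.isZmodMorphism.Build _ _ _ phiA.
pose fmM := GRing.isMonoidMorphism.Build _ _ _ phiM.
pose fRM : {rmorphism L -> M} := HB.pack phi faM fmM.
by exists fRM.
Qed.

Lemma dim_le_morph (L M : fieldExtType rat) (g : {rmorphism L -> M}) :
  (\dim {:L} <= \dim {:M})%N.
Proof.
have gA : zmod_morphism g by move=> u v; rewrite rmorphB.
pose gL : {linear L -> M} := HB.pack (g : L -> M)
  (GRing.isZmodMorphism.Build _ _ _ gA)
  (GRing.isScalable.Build _ _ _ _ _ (rat_linear gA)).
pose G := linfun gL.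
have kerG : lker G == 0%VS.
  by apply/lker0P => u v; rewrite !lfunE /=; apply: fmorph_inj.
have := limg_ker_dim G fullv.
rewrite (eqP kerG) capv0 dimv0 add0n => <-.
exact: dimvS (subvf _).
Qed.

Lemma bij_morph (L M : fieldExtType rat) (g : {rmorphism L -> M})
  (h : {rmorphism M -> L}) : bijective g.
Proof.
have gA : zmod_morphism g by move=> u v; rewrite rmorphB.
pose gL : {linear L -> M} := HB.pack (g : L -> M)
  (GRing.isZmodMorphism.Build _ _ _ gA)
  (GRing.isScalable.Build _ _ _ _ _ (rat_linear gA)).
pose G := linfun gL.
have kerG : lker G == 0%VS.
  by apply/lker0P => u v; rewrite !lfunE /=; apply: fmorph_inj.
have imG : limg G = fullv.
  apply/eqP; rewrite eqEdim subvf /=.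
  have := limg_ker_dim G fullv.
  rewrite (eqP kerG) capv0 dimv0 add0n => ->.
  exact: dim_le_morph h.
exists (G^-1)%VF => u.
  by rewrite -[g u](lfunE gL) -/G (lker0_lfunK kerG).
have := limg_lfunVK (f:=G) (x:=u); rewrite imG memvf lfunE /= => ->//.
Qed.

Lemma eq_lin (K : comNzRingType) (x y u v k : K) :
  u = v -> x - y = k * (u - v) -> x = y.
Proof. by move=> -> /eqP; rewrite subrr mulr0 subr_eq0 => /eqP. Qed.

Lemma prod3 (K : comNzRingType) (r1 r2 r3 : K) :
  ('X - r1%:P) * ('X - r2%:P) * ('X - r3%:P) =
  'X^3 - (r1 + r2 + r3)%:P * 'X^2 + (r1*r2 + r1*r3 + r2*r3)%:P * 'X - (r1*r2*r3)%:P.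
Proof. rewrite !rmorphD !rmorphM /=; ring. Qed.

Lemma map_fcubic (K : fieldExtType rat) a b :
  map_poly (in_alg K) (fcubic a b) =
  'X^3 + ((3 * b)%:~R)%:P * 'X - ((2 * a)%:~R)%:P.
Proof.
have h z : ((z%:~R : rat)%:A : K) = z%:~R by rewrite -in_algE rmorph_int.
by rewrite /fcubic rmorphB rmorphD rmorphXn rmorphM /= map_polyX !map_polyC /= !h.
Qed.

Lemma size_low (K : nzRingType) (c d : K) : leq (size (c%:P * 'X - d%:P)) 2.
Proof.
apply: leq_trans (size_polyD _ _) _; rewrite geq_max size_polyN mul_polyC.
rewrite (leq_trans (size_scale_leq _ _)) ?size_polyX //.
exact: leq_trans (size_polyC_leq1 _) _.
Qed.

Lemma monic_cub (K : nzRingType) (c d : K) : 'X^3 + c%:P * 'X - d%:P \is monic.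
Proof.
rewrite -addrA monicE lead_coefDl ?lead_coefXn //.
by rewrite size_polyXn; exact: (leq_ltn_trans (size_low c d)).
Qed.

Lemma size_cub (K : nzRingType) (c d : K) : size ('X^3 + c%:P * 'X - d%:P) = 4.
Proof.
by rewrite -addrA size_polyDl size_polyXn //; apply: leq_ltn_trans (size_low c d) _.
Qed.

Lemma roots_data (K : fieldExtType rat) a b :
  is_splitting_field_Q K (fcubic a b) ->
  exists r1 r2 r3 : K, [/\ r1 + r2 + r3 = 0, r1*r2 + r1*r3 + r2*r3 = (3 * b)%:~R,
    r1*r2*r3 = (2 * a)%:~R & <<1 & [:: r1; r2; r3]>>%VS = fullv].
Proof.
case=> rs Hp Hgen.
rewrite map_fcubic in Hp.
have /eqp_size := Hp; rewrite size_cub size_prod_XsubC.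
case: rs Hp Hgen => [|r1 [|r2 [|r3 [|]]]] //= Hp Hgen _.
move: Hp; rewrite eqp_monic ?monic_cub ?monic_prod_XsubC // => /eqP.
rewrite !big_cons big_nil mulr1 mulrA prod3 => E.
have c0 := congr1 (fun p : {poly K} => p`_0) E.
have c1 := congr1 (fun p : {poly K} => p`_1) E.
have c2 := congr1 (fun p : {poly K} => p`_2) E.
move: c0 c1 c2; rewrite /= !coefE /= !(mulr0, mulr1, add0r, subr0, sub0r) => c0 c1 c2.
rewrite ?oppr0 ?addr0 ?add0r ?sub0r ?subr0 in c0 c1 c2.
exists r1, r2, r3; split => //.
- by apply/eqP; rewrite -oppr_eq0 -c2.
- by apply: oppr_inj; rewrite c0.
Qed.

Lemma nat_neq0 (K : fieldExtType rat) n : (n.+1%:R : K) != 0.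
Proof. by rewrite -(rmorph_nat (in_alg K)) fmorph_eq0 pnatr_eq0. Qed.

Lemma int_neq0 (K : fieldExtType rat) (z : int) : z != 0 -> (z%:~R : K) != 0.
Proof. by move=> hz; rewrite -(rmorph_int (in_alg K)) fmorph_eq0 intr_eq0. Qed.

Lemma cube2 (K : fieldExtType rat) (rho : K) (m T : int) (k : nat) :
  rho^+3 = 27 * m%:~R -> m * 4^+k = T^+3 -> (k = 1 \/ k = 2)%N -> m != 0 ->
  exists s : K, s^+3 = 2 /\ forall E : {subfield K}, s \in E -> rho \in E.
Proof.
move=> hr hmT hk hm.
have hT : T != 0.
  apply/eqP => T0; move: hmT; rewrite T0 expr0n /= => /eqP.
  by rewrite mulf_eq0 expf_eq0 (negPf hm) /= => /andP[_].
have hmK : (m%:~R : K) != 0 by apply: int_neq0.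
have hTK : (T%:~R : K) != 0 by apply: int_neq0.
have hmTK : (m%:~R : K) * 4^+k = T%:~R^+3.
  by have := congr1 (fun z : int => (z%:~R : K)) hmT; rewrite /= intrM !rmorphXn /=.
case: hk => hk; rewrite hk in hmTK.
  exists (2 * rho / (3 * T%:~R)); split.
    rewrite expr_div_n !exprMn hr -hmTK; field.
    by rewrite hmK !nat_neq0.
  move=> E sE.
  have -> : rho = (2 * rho / (3 * T%:~R)) * (3 * T%:~R / 2).
    by field; rewrite hTK !nat_neq0.
  by rewrite rpredM // rpred_div ?rpredM ?rpred_nat ?rpred_int.
pose y := 4 * rho / (3 * T%:~R).
have hy : y^+3 = 4.
  rewrite /y expr_div_n !exprMn hr -hmTK; field.
  by rewrite hmK !nat_neq0.
exists (y^+2 / 2); split.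
  have -> : (y^+2/2)^+3 = (y^+3)^+2 / 8 by field; rewrite !nat_neq0.
  by rewrite hy; field; rewrite !nat_neq0.
move=> E sE.
have ys : y = (y^+2/2)^+2.
  have -> : (y^+2/2)^+2 = y^+3 * y / 4 by field; rewrite !nat_neq0.
  by rewrite hy; field; rewrite !nat_neq0.
have -> : rho = y * (3 * T%:~R / 4).
  by rewrite /y; field; rewrite hTK !nat_neq0.
by rewrite ys rpredM ?rpredX // rpred_div ?rpredM ?rpred_nat ?rpred_int.
Qed.

Lemma core_id (K : comNzRingType) (w r1 r2 r3 R Rp : K) :
  w^+2 + w + 1 = 0 -> r3 = -(r1+r2) -> R = r1 + w*r2 + w^+2*r3 -> Rp = r1 + w^+2*r2 + w*r3 ->
  [/\ R*Rp = -3 * (r1*r2+r1*r3+r2*r3), R^+3 + Rp^+3 = 27*(r1*r2*r3), 3*r1 = R+Rp, 3*r2 = w^+2*R + w*Rp & 3*r3 = w*R + w^+2*Rp].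
Proof.
move=> hw hr3 hR hRp; split.
- apply: (eq_lin (k := ((-3)*r2^+2 + (-3)*r1*r2 + (-2)*r1^+2 + 3*w*r2^+2 + 3*w*r1*r2 + 1*w*r1^+2 + (-1)*w^+2*r2^+2 + (-1)*w^+2*r1*r2)) hw); rewrite ?hR ?hRp hr3; ring.
- apply: (eq_lin (k := (27*r1*r2^+2 + 27*r1^+2*r2 + 2*r1^+3 + (-27)*w*r1*r2^+2 + (-27)*w*r1^+2*r2 + (-5)*w*r1^+3 + 6*w^+2*r1*r2^+2 + 6*w^+2*r1^+2*r2 + 3*w^+2*r1^+3 + 6*w^+3*r1*r2^+2 + 6*w^+3*r1^+2*r2 + 1*w^+3*r1^+3 + (-3)*w^+4*r1*r2^+2 + (-3)*w^+4*r1^+2*r2 + (-1)*w^+4*r1^+3)) hw); rewrite ?hR ?hRp hr3; ring.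
- apply: (eq_lin (k := (1*r1)) hw); rewrite ?hR ?hRp hr3; ring.
- apply: (eq_lin (k := (3*r2 + (-3)*w*r2 + (-1)*w*r1 + 1*w^+2*r2 + 1*w^+2*r1)) hw); rewrite ?hR ?hRp hr3; ring.
- apply: (eq_lin (k := ((-3)*r2 + (-3)*r1 + 3*w*r2 + 2*w*r1 + (-1)*w^+2*r2)) hw); rewrite ?hR ?hRp hr3; ring.
Qed.
Lemma eq_lin3 (K : comNzRingType) (x y u1 v1 u2 v2 u3 v3 k1 k2 k3 : K) :
  u1 = v1 -> u2 = v2 -> u3 = v3 ->
  x - y = k1 * (u1 - v1) + k2 * (u2 - v2) + k3 * (u3 - v3) -> x = y.
Proof.
by move=> -> -> -> /eqP; rewrite !subrr !mulr0 !addr0 subr_eq0 => /eqP.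
Qed.

Lemma cubic_core (K : fieldExtType rat) (a b c : int) (r1 r2 r3 : K) :
  r1 + r2 + r3 = 0 -> r1*r2+r1*r3+r2*r3 = 3 * b%:~R -> r1*r2*r3 = 2 * a%:~R ->
  a%:~R^+2 + b%:~R^+3 = c%:~R^+10 :> K -> c%:~R != 0 :> K ->
  exists w rho : K, [/\ w^+2+w+1 = 0, rho != 0,
     (rho^+3 = 27*(a%:~R + c%:~R^+5) \/ rho^+3 = 27*(a%:~R - c%:~R^+5)) &
     forall E : {subfield K}, w \in E -> rho \in E -> [/\ r1 \in E, r2 \in E & r3 \in E]].
Proof.
set A : K := a%:~R; set B : K := b%:~R; set C : K := c%:~R.
move=> e1 e2 e3 hABC hC.
have hr3 : r3 = -(r1 + r2) by apply/eqP; rewrite -addr_eq0 addrC e1.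
pose del := (r1-r2)*(r2-r3)*(r3-r1).
have hdel : del^+2 = -108 * C^+10.
  rewrite -hABC; have -> : -108 * (A^+2 + B^+3) = -27*(2*A)^+2 - 4*(3*B)^+3 by ring.
  by rewrite -e2 -e3 /del hr3; ring.
pose d := del / (6 * C^+5).
have hd : d^+2 = -3.
  rewrite /d expr_div_n hdel; field.
  by rewrite hC nat_neq0.
pose w := (d - 1) / 2.
have hw : w^+2 + w + 1 = 0.
  apply: (eq_lin (k := 1/4) hd); rewrite /w; field; by rewrite ?nat_neq0.
pose R := r1 + w*r2 + w^+2*r3; pose Rp := r1 + w^+2*r2 + w*r3.
have [hP hS h1 h2 h3] := core_id hw hr3 (erefl R) (erefl Rp).
rewrite e2 e3 in hP hS; clearbody R Rp w.
have key X : (X = R \/ X = Rp) ->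
    (X^+3 - 27*(A + C^+5)) * (X^+3 - 27*(A - C^+5)) = 0.
  move=> hX.
  have hP' : R * Rp = -9 * B by rewrite hP; ring.
  have hS' : R^+3 + Rp^+3 = 54 * A by rewrite hS; ring.
  case: hX => ->.
    by apply: (eq_lin3 (k1 := R^+3) (k2 := -((R*Rp)^+2 - 9*B*(R*Rp) + 81*B^+2))
      (k3 := 729) hS' hP' hABC); ring.
  by apply: (eq_lin3 (k1 := Rp^+3) (k2 := -((R*Rp)^+2 - 9*B*(R*Rp) + 81*B^+2))
      (k3 := 729) hS' hP' hABC); ring.
have keyP X : (X = R \/ X = Rp) ->
    X^+3 = 27*(A + C^+5) \/ X^+3 = 27*(A - C^+5).
  by move/key/eqP; rewrite mulf_eq0 !subr_eq0 => /orP[] /eqP; [left|right].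
have memR (E : {subfield K}) : w \in E -> R \in E -> Rp \in E ->
    [/\ r1 \in E, r2 \in E & r3 \in E].
  move=> wE RE RpE.
  have i3 : (3 : K)^-1 \in E by rewrite rpredV rpred_nat.
  have -> : r1 = (3 : K)^-1 * (3 * r1) by field; exact: nat_neq0.
  have -> : r2 = (3 : K)^-1 * (3 * r2) by field; exact: nat_neq0.
  have -> : r3 = (3 : K)^-1 * (3 * r3) by field; exact: nat_neq0.
  rewrite h1 h2 h3.
  split; apply: rpredM => //; rewrite ?rpredD ?rpredM ?rpredX //.
have z (i : K) : 3 * i = 0 -> i = 0.
  by move/eqP; rewrite mulf_eq0 (negPf (nat_neq0 _ 2)) => /eqP.
case: (eqVneq R 0) => [R0|Rn0].
  exists w, Rp; split => //.
  - apply/eqP => Rp0.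
    have r1z : r1 = 0 by apply: z; rewrite h1 R0 Rp0; ring.
    have r2z : r2 = 0 by apply: z; rewrite h2 R0 Rp0; ring.
    have r3z : r3 = 0 by apply: z; rewrite h3 R0 Rp0; ring.
    have : -108 * C^+10 = 0 by rewrite -hdel /del r1z r2z r3z; ring.
    move/eqP; rewrite mulf_eq0 oppr_eq0 (negPf (nat_neq0 _ 107)) /= expf_eq0 /=.
    by rewrite (negPf hC).
  - by apply: keyP; right.
  - by move=> E wE RpE; apply: memR => //; rewrite R0 rpred0.
exists w, R; split => //.
- by apply: keyP; left.
move=> E wE RE; apply: memR => //.
have -> : Rp = R^-1 * (R * Rp) by rewrite mulKf.
rewrite hP rpredM ?rpredV // rpredM ?rpredN ?rpred_nat //.
by rewrite rpredM ?rpred_nat ?rpred_int.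
Qed.

Lemma cube_fact (K : fieldExtType rat) (w z : K) : w^+2 + w + 1 = 0 ->
  ('X - z%:P) * ('X - (z*w)%:P) * ('X - (z*w^+2)%:P) = 'X^3 - (z^+3)%:P.
Proof.
move=> hw; rewrite prod3.
have -> : z + z*w + z*w^+2 = 0 by apply: (eq_lin (k := z) hw); ring.
have -> : z*(z*w) + z*(z*w^+2) + (z*w)*(z*w^+2) = 0.
  by apply: (eq_lin (k := w*z^+2) hw); ring.
have -> : z*(z*w)*(z*w^+2) = z^+3 by apply: (eq_lin (k := -z^+3 + w*z^+3) hw); ring.
by rewrite polyC0; ring.
Qed.

Lemma P_split (M : fieldExtType rat) (x w : M) : x^+6 = -108 -> w^+2+w+1 = 0 ->
  map_poly (in_alg M) ('X^6 + 108%:P) %=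
  \prod_(z <- [:: x; x*w; x*w^+2; -x; -x*w; -x*w^+2]) ('X - z%:P).
Proof.
move=> hx hw.
have -> : \prod_(z <- [:: x; x*w; x*w^+2; -x; -x*w; -x*w^+2]) ('X - z%:P) =
   (('X - x%:P) * ('X - (x*w)%:P) * ('X - (x*w^+2)%:P)) *
   (('X - (-x)%:P) * ('X - (-x*w)%:P) * ('X - (-x*w^+2)%:P)).
  by rewrite !big_cons big_nil; ring.
rewrite !cube_fact // rmorphD rmorphXn /= map_polyX map_polyC /=.
have -> : ((108 : rat)%:A : M) = - x^+6 by rewrite hx opprK -in_algE rmorph_nat.
rewrite !rmorphN !rmorphXn /=.
have Eq (p q : {poly M}) : p = q -> p %= q by move=> ->; exact: eqpxx.
apply: Eq; ring.
Qed.

Lemma prim (K : fieldExtType rat) (s w : K) : s^+3 = 2 -> w^+2+w+1 = 0 ->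
  (s*(1+2*w))^+6 = -108 /\
  forall E : {subfield K}, s*(1+2*w) \in E -> s \in E /\ w \in E.
Proof.
move=> hs hw; set x := s*(1+2*w); set d := 1 + 2*w.
have hd : d^+2 = -3 by apply: (eq_lin (k := 4) hw); rewrite /d; ring.
have hx3 : x^+3 = -6 * d.
  rewrite /x exprMn hs -/d; have -> : d^+3 = d * d^+2 by ring.
  by rewrite hd; ring.
split.
  have -> : x^+6 = (x^+3)^+2 by rewrite -exprM.
  by rewrite hx3 exprMn hd; ring.
move=> E xE.
have dn0 : d != 0.
  apply/eqP => d0; move: hd; rewrite d0 expr0n /= => /eqP.
  by rewrite eq_sym oppr_eq0 (negPf (nat_neq0 _ 2)).
have dE : d \in E.
  have -> : d = x^+3 / (-6) by rewrite hx3; field; rewrite ?oppr_eq0 ?nat_neq0.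
  by rewrite rpred_div ?rpredX ?rpredN ?rpred_nat.
split.
  have -> : s = x / d by rewrite /x /d; field.
  by rewrite rpred_div.
have -> : w = (d - 1) / 2 by rewrite /d; field; rewrite !nat_neq0.
by rewrite rpred_div ?rpredB ?rpred1 ?rpred_nat.
Qed.

Lemma intrX_ (R : pzRingType) (z : int) n : (z^+n)%:~R = (z%:~R : R)^+n.
Proof. by rewrite rmorphXn. Qed.

Lemma field_data (K : fieldExtType rat) (a b c : int) :
  is_splitting_field_Q K (fcubic a b) -> c != 0 -> a^+2 + b^+3 = c^+10 ->
  (forall m : int, (m = a + c^+5 \/ m = a - c^+5) -> m != 0 ->
     exists k T, (k = 1 \/ k = 2)%N /\ m * 4^+k = T^+3) ->
  exists x w : K, [/\ <<1; x>>%VS = fullv, x^+6 = -108 & w^+2 + w + 1 = 0].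
Proof.
move=> hsp hc habc harith.
have [r1 [r2 [r3 [e1 e2 e3 gen]]]] := roots_data hsp.
rewrite intrM in e2; rewrite intrM in e3.
have hK : a%:~R^+2 + b%:~R^+3 = c%:~R^+10 :> K.
  by have := congr1 (fun z : int => (z%:~R : K)) habc; rewrite /= intrD !rmorphXn.
have [w [rho [hw hrho hr3 hmem]]] := cubic_core e1 e2 e3 hK (int_neq0 K hc).
have [m [hm hrm]] : exists m : int, (m = a + c^+5 \/ m = a - c^+5) /\
    rho^+3 = 27 * m%:~R.
  case: hr3 => h; [exists (a + c^+5); split; [by left|] |
    exists (a - c^+5); split; [by right|]]; by rewrite h ?intrD ?intrB ?intrN -?intrX_.
have m0 : m != 0.
  apply/eqP => m0; move: hrm; rewrite m0 mulr0 => /eqP.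
  by rewrite expf_eq0 (negPf hrho) andbF.
have [k [T [hk hmT]]] := harith m hm m0.
have [s [hs sE]] := cube2 hrm hmT hk m0.
have [hx xE] := prim hs hw.
exists (s * (1 + 2 * w)), w; split => //.
pose E := <<1; s * (1 + 2 * w)>>%AS.
have [sE' wE'] := xE E (memv_adjoin _ _).
have rhoE := sE E sE'.
have [r1E r2E r3E] := hmem E wE' rhoE.
apply/eqP; rewrite eqEsubv subvf /= -gen.
apply/Fadjoin_seqP; split; first exact: sub1v.
by move=> z; rewrite !inE => /or3P[] /eqP ->.
Qed.

Lemma irr_noroot (a b : int) (q : rat) :
  irreducible_poly (fcubic a b) -> root (fcubic a b) q -> False.
Proof.
move=> irr rq.
have := irredp_XsubCP irr (_ : 'X - q%:P %| fcubic a b).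
rewrite dvdp_XsubCl => /(_ rq) [] /eqp_size; rewrite size_XsubC //.
  by rewrite size_poly1.
by rewrite /fcubic size_cub.
Qed.

Lemma root_fcubic (a b : int) (q : rat) :
  root (fcubic a b) q = (q^+3 + 3 * b%:~R * q - 2 * a%:~R == 0).
Proof.
by rewrite /root /fcubic !hornerE !intrM.
Qed.

Lemma c_nonzero (a b c : int) : a^+2 + b^+3 = c^+10 ->
  irreducible_poly (fcubic a b) -> c != 0.
Proof.
move=> habc irr; apply/eqP => c0.
rewrite c0 expr0n /= in habc.
have hK : (a%:~R : rat)^+2 + (b%:~R)^+3 = 0.
  by have := congr1 (fun z : int => (z%:~R : rat)) habc; rewrite /= intrD !intrX_.
apply: (irr_noroot (q := a%:~R / b%:~R) irr); rewrite root_fcubic.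
have [b0|bn0] := eqVneq (b%:~R : rat) 0.
  have a0 : (a%:~R : rat) = 0.
    by move: hK; rewrite b0 expr0n /= addr0 => /eqP; rewrite expf_eq0 => /andP[_ /eqP].
  by rewrite a0 b0; apply/eqP; ring.
apply/eqP.
have -> : (a%:~R / b%:~R : rat)^+3 + 3 * b%:~R * (a%:~R / b%:~R) - 2 * a%:~R =
   a%:~R * ((a%:~R)^+2 + (b%:~R)^+3) / (b%:~R)^+3 by field.
by rewrite hK mulr0 mul0r.
Qed.

Lemma odd_dvd2 (p : nat) (x : int) : prime p -> odd p ->
  (p%:Z %| 2 * x)%Z -> (p%:Z %| x)%Z.
Proof.
move=> pp op; rewrite Gauss_dvdzr //.
rewrite /coprimez /gcdz /=; change (coprime p 2); by rewrite coprimen2.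
Qed.

Lemma prime_dvdzX (p : nat) (x : int) n : prime p ->
  (p%:Z %| x ^+ n.+1)%Z -> (p%:Z %| x)%Z.
Proof.
by move=> pp; rewrite !dvdzE /= abszX Euclid_dvdX // andbT.
Qed.

Lemma arith_general (a b c : int) : gcdz (gcdz a b) c = 1 ->
  a^+2 + b^+3 = c^+10 -> irreducible_poly (fcubic a b) ->
  forall m : int, (m = a + c^+5 \/ m = a - c^+5) -> m != 0 ->
     exists k T, (k = 1 \/ k = 2)%N /\ m * 4^+k = T^+3.
Proof.
move=> hg habc irr m hm m0.
have [e [he hme]] : exists e, (e = c^+5 \/ e = - c^+5) /\ m = a + e.
  by case: hm => ->; [exists (c^+5) | exists (- c^+5)]; split; auto.
pose n := a - e.
have hmn : m * n = - b^+3.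
  have he2 : e^+2 = c^+10 by case: he => ->; rewrite ?sqrrN -exprM.
  have he2' : e^+2 = a^+2 + b^+3 by rewrite he2 habc.
  by rewrite /n hme; apply: (eq_lin (k := -1) he2'); ring.
have hp (p : nat) : prime p -> odd p -> (p %| `|m|)%N -> (p %| `|n|)%N -> False.
  move=> pp op pm pn.
  have pm' : (p%:Z %| m)%Z by rewrite dvdzE.
  have pn' : (p%:Z %| n)%Z by rewrite dvdzE.
  have pa : (p%:Z %| a)%Z.
    apply: odd_dvd2 => //.
    have -> : 2 * a = m + n by rewrite /n hme; ring.
    exact: rpredD.
  have pe : (p%:Z %| e)%Z.
    apply: odd_dvd2 => //.
    have -> : 2 * e = m - n by rewrite /n hme; ring.
    exact: rpredB.
  have pc : (p%:Z %| c)%Z.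
    apply: (@prime_dvdzX p c 4) => //.
    by case: he pe => -> //; rewrite dvdzE abszN.
  have pb : (p%:Z %| b)%Z.
    apply: (@prime_dvdzX p b 2) => //.
    have : (p%:Z %| m * n)%Z by exact: dvdz_mulr.
    by rewrite hmn dvdzE abszN.
  have : (p%:Z %| gcdz (gcdz a b) c)%Z by rewrite !dvdz_gcd pa pb pc.
  rewrite hg dvdzE /= dvdn1 => /eqP p1.
  by move: pp; rewrite p1.
have [k [T [hk hT]]] := NTint hmn m0 hp.
case: k hk hT => [|[|[|k]]] // _ hT; last 2 first.
- by exists 1%N, T; split; [left|].
- by exists 2%N, T; split; [right|].
exfalso; rewrite expr0 mulr1 in hT.
have T0 : (T%:~R : rat) != 0.
  by rewrite intr_eq0; apply: contraNneq m0 => T0; rewrite hT T0 expr0n.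
apply: (irr_noroot (q := T%:~R - b%:~R / T%:~R) irr); rewrite root_fcubic.
have hm3 : (m%:~R : rat) = T%:~R^+3 by rewrite hT intrX_.
have hmn' : (m%:~R : rat) * n%:~R = - b%:~R^+3.
  by rewrite -intrM hmn intrN intrX_.
have hmn2 : (m%:~R : rat) + n%:~R = 2 * a%:~R.
  by rewrite -intrD /n hme (_ : a + e + (a - e) = 2 * a) ?intrM //; ring.
apply/eqP.
have -> : (T%:~R - b%:~R / T%:~R : rat)^+3 + 3 * b%:~R * (T%:~R - b%:~R / T%:~R)
   - 2 * a%:~R = T%:~R^+3 - b%:~R^+3 / T%:~R^+3 - 2 * a%:~R by field.
have hb3 : (b%:~R : rat)^+3 = - (m%:~R * n%:~R) by rewrite hmn' opprK.
rewrite -hm3 -hmn2 hb3; field.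
by rewrite hm3 expf_neq0.
Qed.

Lemma fcubic_g : fcubic 3 (-2) = 'X^3 - 6%:P * 'X - 6%:P.
Proof.
rewrite /fcubic; have -> : ((3 * -2)%:~R : rat) = -6 by [].
have -> : ((2 * 3)%:~R : rat) = 6 by [].
by rewrite polyCN mulNr.
Qed.

Lemma arith_g (m : int) : (m = 3 + 1^+5 \/ m = 3 - 1^+5) -> m != 0 ->
  exists k T, (k = 1 \/ k = 2)%N /\ m * 4^+k = T^+3.
Proof.
case=> -> _.
  by exists 2%N, 4; split; [right|].
by exists 1%N, 2; split; [left|].
Qed.

Lemma P_root (L : fieldExtType rat) (x : L) : x^+6 = -108 ->
  root (map_poly (in_alg L) ('X^6 + 108%:P)) x.
Proof.
move=> hx; rewrite /root rmorphD rmorphXn /= map_polyX map_polyC /= !hornerE hx.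
by rewrite -in_algE rmorph_nat addNr.
Qed.

Lemma P_neq0 : ('X^6 + 108%:P : {poly rat}) != 0.
Proof. by rewrite -size_poly_eq0 size_XnaddC. Qed.

Theorem lemma3p4 (a b c : int) :
  gcdz (gcdz a b) c = 1 ->
  a ^+ 2 + b ^+ 3 = c ^+ 10 ->
  irreducible_poly (fcubic a b) ->
  forall (L1 L2 : fieldExtType rat),
    is_splitting_field_Q L1 (fcubic a b) ->
    is_splitting_field_Q L2 ('X^3 - 6%:P * 'X - 6%:P) ->
    field_iso L1 L2.
Proof.
move=> hg habc irr L1 L2 h1 h2.
have c0 := c_nonzero habc irr.
have [x1 [w1 [gen1 hx1 hw1]]] := field_data h1 c0 habc (arith_general hg habc irr).
rewrite -fcubic_g in h2.
have [x2 [w2 [gen2 hx2 hw2]]] := field_data h2 (isT : (1 : int) != 0) (erefl _) arith_g.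
have [g _] := ext_morph gen1 P_neq0 (P_root hx1) (P_split hx2 hw2).
have [h _] := ext_morph gen2 P_neq0 (P_root hx2) (P_split hx1 hw1).
by exists g; exact: bij_morph g h.
Qed.
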